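(* Let $F=\begin{pmatrix}-1&-1&-1\\-1&8&-1\\-1&-1&-1\end{pmatrix}$ (edge detect C filter). Then the equation $F*X=B$ with the zero boundary condition, for unknown $X\in\mathbb{R}^{m\times n}$, has a unique solution for every $B\in\mathbb{R}^{m\times n}$ (for all $m,n\in\mathbb{N}$).
   Context: For $F=[f_{ij}]\in\mathbb{R}^{3\times3}$ and $X=[x_{ij}]\in\mathbb{R}^{m\times n}$, the convolution $F*X\in\mathbb{R}^{m\times n}$ is defined by $[F*X]_{ij}=\sum_{l_1=1}^3\sum_{l_2=1}^3 f_{l_1l_2}\,x_{i-l_1+2,\,j-l_2+2}$ for $1\le i\le m$, $1\le j\le n$, where under the zero boundary condition all values $x_{ij}$ with $i\in\{0,m+1\}$ or $j\in\{0,n+1\}$ are $0$. *)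

(* Defs.v *)
From mathcomp Require Import all_boot all_order all_algebra.
From mathcomp Require Import reals.
Set Implicit Arguments. Unset Strict Implicit. Unset Printing Implicit Defensive.
Import Order.TTheory GRing.Theory Num.Theory.
Local Open Scope ring_scope.

(* Indices are 0-based: row i : 'I_m corresponds to the paper's row i+1. *)

(* Entry of X at (0-based, possibly out-of-range) integer position (a, b);
   zero boundary condition: out-of-range entries are 0. *)
Definition xget (R : pzRingType) (m n : nat) (X : 'M[R]_(m, n)) (a b : int) : R :=
  match a, b with
  | Posz a', Posz b' =>
      (if insub a' : option 'I_m is Some i then
         if insub b' : option 'I_n is Some j then X i j else 0
       else 0)
  | _, _ => 0
  end.

(* [F*X]_{ij} = sum_{l1,l2 in 1..3} f_{l1 l2} x_{i-l1+2, j-l2+2}; in 0-based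
   indices (i, j, l1, l2 shifted by one) the X-index is (i - l1 + 1, j - l2 + 1). *)
Definition conv (R : pzRingType) (m n : nat) (F : 'M[R]_3) (X : 'M[R]_(m, n))
  : 'M[R]_(m, n) :=
  \matrix_(i < m, j < n)
     \sum_(l1 < 3) \sum_(l2 < 3)
        F l1 l2 * xget X (i%:Z - l1%:Z + 1) (j%:Z - l2%:Z + 1).

Definition edgeC (R : pzRingType) : 'M[R]_3 :=
  \matrix_(i < 3, j < 3) (if (i == 1 :> nat) && (j == 1 :> nat) then 8 else -1).

(* Main.v *)
From HB Require Import structures.
Require Import Defs.
From mathcomp Require Import all_boot all_order all_algebra.
From mathcomp Require Import reals ring lra zify.
Import Order.TTheory GRing.Theory Num.Theory.
Local Open Scope ring_scope.
Arguments xget : simpl never.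

Section S.
Variables (R : realType) (m n : nat).

Lemma xget_lin (a : R) (X Y : 'M[R]_(m,n)) p q :
  xget (a *: X + Y) p q = a * xget X p q + xget Y p q.
Proof.
rewrite /xget; case: p => [p|p]; case: q => [q|q] /=; rewrite ?mulr0 ?addr0 //.
case: (insubP 'I_m p) => [i _ _|_]; case: (insubP 'I_n q) => [j _ _|_]; rewrite ?mxE ?mulr0 ?addr0 //.
Qed.

Definition convL (X : 'M[R]_(m,n)) := conv (edgeC R) X.

Lemma convL_lin : linear convL.
Proof.
move=> a X Y; apply/matrixP => i j; rewrite /convL /conv !mxE.
rewrite mulr_sumr -big_split /=; apply: eq_bigr => l1 _.
rewrite mulr_sumr -big_split /=; apply: eq_bigr => l2 _.
rewrite xget_lin; ring.
Qed.

HB.instance Definition _ := GRing.isLinear.Build R 'M[R]_(m,n) 'M[R]_(m,n) _ convL convL_lin.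

Lemma xgetE (X : 'M[R]_(m,n)) (i : 'I_m) (j : 'I_n) : xget X i%:Z j%:Z = X i j.
Proof.
rewrite /xget /=.
case: (insubP 'I_m i) => [i' _ /val_inj -> | ]; last by rewrite ltn_ord.
case: (insubP 'I_n j) => [j' _ /val_inj -> | ]; last by rewrite ltn_ord.
by [].
Qed.

Lemma conv_expand (X : 'M[R]_(m,n)) i j : conv (edgeC R) X i j =
  8 * X i j - (xget X (i%:Z + 1) (j%:Z + 1) + xget X (i%:Z + 1) j%:Z + xget X (i%:Z + 1) (j%:Z - 1)
   + xget X i%:Z (j%:Z + 1) + xget X i%:Z (j%:Z - 1)
   + xget X (i%:Z - 1) (j%:Z + 1) + xget X (i%:Z - 1) j%:Z + xget X (i%:Z - 1) (j%:Z - 1)).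
Proof.
rewrite /conv mxE !big_ord_recl !big_ord0 !mxE /= /bump /= !addr0.
have e1 : forall k : nat, (k%:Z - (1 + 0)%N%:Z + 1) = k by move=> k; lia.
have e2 : forall k : nat, (k%:Z - (1 + (1 + 0))%N%:Z + 1) = k%:Z - 1 by move=> k; lia.
rewrite !e1 !e2 xgetE; ring.
Qed.


Lemma conv_inj (X : 'M[R]_(m,n)) : conv (edgeC R) X = 0 -> X = 0.
Proof.
move=> H0.
set M := \big[Order.max/0]_(p : 'I_m * 'I_n) `|X p.1 p.2|.
have leM : forall i j, `|X i j| <= M.
  by move=> i j; rewrite /M (le_bigmax _ _ (i, j)).
case: (ltrP 0 M) => [Mpos|Mle0]; last first.
  apply/matrixP => i j; rewrite mxE; apply/eqP; rewrite -normr_le0.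
  exact: le_trans (leM i j) Mle0.
have xg : forall a b, `|xget X a b| <= M.
  move=> a b; rewrite /xget; case: a => [a|a]; case: b => [b|b] /=;
    rewrite ?normr0; try exact: ltW Mpos.
  case: (insubP 'I_m a) => [i _ _|_]; case: (insubP 'I_n b) => [j _ _|_];
    rewrite ?normr0; try exact: ltW Mpos.
  exact: leM.
have key : forall (i : 'I_m) (j : 'I_n), `|xget X (i%:Z - 1) j%:Z| < M -> `|X i j| < M.
  move=> i j Hlt.
  have E : conv (edgeC R) X i j = 0 by rewrite H0 mxE.
  rewrite conv_expand in E.
  move: Hlt; rewrite !ltr_norml => /andP [h1 h2].
  move: (xg (i%:Z + 1) (j%:Z + 1)) (xg (i%:Z + 1) j%:Z) (xg (i%:Z + 1) (j%:Z - 1))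
   (xg i%:Z (j%:Z + 1)) (xg i%:Z (j%:Z - 1)) (xg (i%:Z - 1) (j%:Z + 1))
   (xg (i%:Z - 1) (j%:Z - 1)).
  rewrite !ler_norml => /andP[a1 b1] /andP[a2 b2] /andP[a3 b3] /andP[a4 b4]
    /andP[a5 b5] /andP[a6 b6] /andP[a7 b7].
  apply/andP; split; lra.
have ind : forall k (i : 'I_m) (j : 'I_n), (i < k)%N -> `|X i j| < M.
  elim=> [//|k IH] i j; rewrite ltnS leq_eqVlt => /orP [/eqP ik|]; last exact: IH.
  apply: key; case: i ik => [[|i'] Hi] /= ik.
    by rewrite /xget /= normr0.
  have -> : (i'.+1%:Z - 1) = i'%:Z by lia.
  have Hi' : (i' < m)%N by lia.
  rewrite (xgetE X (Ordinal Hi')); apply: IH => /=; lia.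
have : M < M.
  rewrite {1}/M; apply: bigmax_lt => // [[i j]] _ /=; exact: (ind i.+1).
by rewrite ltxx.
Qed.

End S.

Theorem corollary13 (R : realType) (m n : nat) (B : 'M[R]_(m, n)) :
  exists! X : 'M[R]_(m, n), conv (edgeC R) X = B.
Proof.
pose A := lin_mx (@convL R m n).
have Au : A \in unitmx.
  rewrite -row_free_unit; apply: inj_row_free => v Hv.
  rewrite mul_rV_lin in Hv.
  have : vec_mx v = 0.
    apply: conv_inj; apply: (can_inj mxvecK); by rewrite linear0.
  by move=> /(congr1 mxvec); rewrite vec_mxK linear0.
exists (vec_mx (mxvec B *m invmx A)); split.
  apply: (can_inj mxvecK); rewrite -[conv _ _]/(convL R m n _) -mul_rV_lin.
  by rewrite mulmxKV.
move=> Y HY.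
have : convL R m n (vec_mx (mxvec B *m invmx A) - Y) = 0.
  rewrite raddfB /=; rewrite /convL HY.
  have -> : conv (edgeC R) (vec_mx (mxvec B *m invmx A)) = B.
    apply: (can_inj mxvecK); rewrite -[conv _ _]/(convL R m n _) -mul_rV_lin.
    by rewrite mulmxKV.
  by rewrite subrr.
by move=> /conv_inj /eqP; rewrite subr_eq0 => /eqP.
Qed.
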